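(* Fix parameters and a population size vector $\mathbf m$ as in the context, with Assumption (A). Let $\mathbf y^\star\in\arg\min_{\mathbf y\in\mathcal Y}\overline{SC}(\mathbf y)$ be any minimizer of the social cost, and let $d^\dagger=\min\{d\in\mathcal D: y^\star_d>0\}$, with $d^\dagger=D_{\max}+1$ if this set is empty. If $d^\dagger<D_{\max}$, then $y^\star_d=m_d$ for all $d>d^\dagger$.
   Context: Let $D_{\max}\in\mathbb N$, $\mathcal D=\{1,\dots,D_{\max}\}$, $\mathcal A=\{I,N,P\}$. A population size vector is $\mathbf m=(m_d)_{d\in\mathcal D}$ with $m_d>0$, $\sum_d m_d=1$. A social state is $\mathbf x=(x_{d,a})$ with $x_{d,a}\ge0$, $\sum_a x_{d,a}=m_d$. Parameters: $\tau_{DA}\in(0,1]$; $0\le L_P<L_U$, $\Delta L=L_U-L_P$; $0\le p_P^i<p_U^i\le1$; $\beta_{IA}\in(0,1]$; $K\in\mathbb N$; $c_P,c_I\ge0$; $\xi_{\rm cov}\in(0,1]$, $ded\ge0$. Define $w_d=d\,m_d/\sum_{d'}d'm_{d'}$, $g_{d,a}=x_{d,a}/m_d$, $g_{d,U}=g_{d,N}+g_{d,I}$, $\gamma(\mathbf x)=\beta_{IA}\sum_d w_d(g_{d,P}p_P^i+g_{d,U}p_U^i)$, $\lambda(\mathbf x)=\beta_{IA}\sum_d w_d(d-1)(g_{d,P}p_P^i+g_{d,U}p_U^i)$, $e(\mathbf x)=\gamma(\mathbf x)\sum_{k=1}^K\lambda(\mathbf x)^{k-1}$, $C_{d,P}(\mathbf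 x)=\tau_{DA}(1+d\,e(\mathbf x))L_P+c_P$, $C_{d,N}(\mathbf x)=\tau_{DA}(1+d\,e(\mathbf x))L_U$. Let $\mathcal Y=\prod_{d\in\mathcal D}[0,m_d]$ and for $\mathbf y\in\mathcal Y$ let $\mathbf X(\mathbf y)$ be the social state with $X_{d,P}=y_d$, $X_{d,N}=m_d-y_d$, $X_{d,I}=0$. The social cost is $\overline{SC}(\mathbf y)=\sum_{d\in\mathcal D}\big(y_d\,C_{d,P}(\mathbf X(\mathbf y))+(m_d-y_d)\,C_{d,N}(\mathbf X(\mathbf y))\big)$. Assumption (A): $L_P<(1-\xi_{\rm cov})L_U$ and $c_P>c_I+ded$. *)

(* Defs.v *)
From mathcomp Require Import all_boot all_order all_algebra.
From mathcomp Require Import reals.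
Set Implicit Arguments. Unset Strict Implicit. Unset Printing Implicit Defensive.
Import Order.TTheory GRing.Theory Num.Theory.
Local Open Scope ring_scope.

(* Actions: I (infected/isolated), N (no protection), P (protection). *)
Inductive action := actI | actN | actP.

Section Model.
Variable R : realType.

(* Degrees d range over 1..Dmax; functions indexed by nat, values outside
   1..Dmax are irrelevant. A social state is x : nat -> action -> R. *)

Definition wdeg (Dmax : nat) (m : nat -> R) (d : nat) : R :=
  d%:R * m d / \sum_(1 <= d' < Dmax.+1) d'%:R * m d'.

Definition gfrac (m : nat -> R) (x : nat -> action -> R) (d : nat) (a : action) : R :=
  x d a / m d.

Definition gU (m : nat -> R) (x : nat -> action -> R) (d : nat) : R :=
  gfrac m x d actN + gfrac m x d actI.

Definition gammaF (Dmax : nat) (m : nat -> R) (beta pP pU : R)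
  (x : nat -> action -> R) : R :=
  beta * \sum_(1 <= d < Dmax.+1)
     wdeg Dmax m d * (gfrac m x d actP * pP + gU m x d * pU).

Definition lambdaF (Dmax : nat) (m : nat -> R) (beta pP pU : R)
  (x : nat -> action -> R) : R :=
  beta * \sum_(1 <= d < Dmax.+1)
     wdeg Dmax m d * (d.-1)%:R * (gfrac m x d actP * pP + gU m x d * pU).

Definition eF (Dmax : nat) (m : nat -> R) (beta pP pU : R) (K : nat)
  (x : nat -> action -> R) : R :=
  gammaF Dmax m beta pP pU x *
  \sum_(1 <= k < K.+1) lambdaF Dmax m beta pP pU x ^+ k.-1.

Definition CostP (Dmax : nat) (m : nat -> R) (tau LP beta pP pU cP : R) (K : nat)
  (x : nat -> action -> R) (d : nat) : R :=
  tau * (1 + d%:R * eF Dmax m beta pP pU K x) * LP + cP.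

Definition CostN (Dmax : nat) (m : nat -> R) (tau LU beta pP pU : R) (K : nat)
  (x : nat -> action -> R) (d : nat) : R :=
  tau * (1 + d%:R * eF Dmax m beta pP pU K x) * LU.

Definition Xof (m y : nat -> R) : nat -> action -> R :=
  fun d a => match a with actP => y d | actN => m d - y d | actI => 0 end.

Definition SCbar (Dmax : nat) (m : nat -> R) (tau LP LU beta pP pU cP : R)
  (K : nat) (y : nat -> R) : R :=
  \sum_(1 <= d < Dmax.+1)
    (y d * CostP Dmax m tau LP beta pP pU cP K (Xof m y) d
     + (m d - y d) * CostN Dmax m tau LU beta pP pU K (Xof m y) d).

Definition inY (Dmax : nat) (m y : nat -> R) : Prop :=
  forall d, (1 <= d <= Dmax)%N -> 0 <= y d <= m d.

End Model.

(* Main.v *)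
Require Import Defs.
From mathcomp Require Import all_boot all_order all_algebra.
From mathcomp Require Import reals ring lra.
Import Order.TTheory GRing.Theory Num.Theory.
Set Implicit Arguments. Unset Strict Implicit.
Local Open Scope ring_scope.

Section Helpers.
Variable R : realType.

Lemma sum_ind (n a : nat) (c : R) : (1 <= a < n)%N ->
  \sum_(1 <= j < n) (if j == a then c else 0) = c.
Proof.
move=> ha; rewrite (bigD1_seq a) ?mem_index_iota ?iota_uniq //= eqxx.
by rewrite big1 ?addr0 // => j /negbTE ->.
Qed.

Lemma sum2 n a b (f g : nat -> R) : (1 <= a < n)%N -> (1 <= b < n)%N -> a != b ->
  (forall j, j != a -> j != b -> g j = f j) ->
  \sum_(1 <= j < n) g j = \sum_(1 <= j < n) f j + (g a - f a) + (g b - f b).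
Proof.
move=> ha hb hab hg.
rewrite -(sum_ind (g a - f a) ha) -(sum_ind (g b - f b) hb) -!big_split /=.
apply: eq_bigr => j _.
have [->|hja] := eqVneq j a; first by rewrite (negbTE hab); ring.
have [->|hjb] := eqVneq j b; first by ring.
by rewrite hg //; ring.
Qed.

Definition ymv (y : nat -> R) (a b : nat) (eps : R) (j : nat) : R :=
  if j == a then y a - eps else if j == b then y b + eps else y j.

Lemma lin2 n a b eps y (A B : nat -> R) : (1 <= a < n)%N -> (1 <= b < n)%N -> a != b ->
  \sum_(1 <= j < n) (A j + B j * ymv y a b eps j)
  = \sum_(1 <= j < n) (A j + B j * y j) + eps * (B b - B a).
Proof.
move=> ha hb hab.
rewrite (sum2 (f := fun j => A j + B j * y j) ha hb hab); last first.
  by move=> j hja hjb; rewrite /ymv (negbTE hja) (negbTE hjb).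
rewrite /ymv eqxx eq_sym (negbTE hab) eqxx; ring.
Qed.

Lemma P_mono K (l l' : R) : 0 <= l' -> l' <= l ->
  \sum_(1 <= k < K.+1) l' ^+ k.-1 <= \sum_(1 <= k < K.+1) l ^+ k.-1.
Proof.
move=> h0 h1; apply: ler_sum => k _; apply: lerXn2r => //; rewrite nnegrE //.
exact: le_trans h1.
Qed.

Lemma P_ge1 K (l : R) : (1 <= K)%N -> 0 <= l -> 1 <= \sum_(1 <= k < K.+1) l ^+ k.-1.
Proof.
move=> hK hl; rewrite big_ltn ?ltnS // expr0 lerDl.
by apply: sumr_ge0 => k _; apply: exprn_ge0.
Qed.

End Helpers.

Section Forms.
Variable R : realType.
Variables (Dmax : nat) (m : nat -> R).
Let M := \sum_(1 <= d' < Dmax.+1) d'%:R * m d'.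

Lemma gamma_form beta pP pU y : (forall j, (1 <= j <= Dmax)%N -> 0 < m j) -> M != 0 ->
  gammaF Dmax m beta pP pU (Xof m y) = beta / M *
   \sum_(1 <= j < Dmax.+1) (j%:R * m j * pU + (- (j%:R * (pU - pP))) * y j).
Proof.
move=> hm hM; rewrite /gammaF -(mulrA beta) [X in _ = _ * X]mulr_sumr; congr (_ * _).
apply: eq_big_nat => j /andP[h1 h2].
have hj : m j != 0 by rewrite gt_eqF // hm // h1 -ltnS.
rewrite /wdeg /gU /gfrac /Xof -/M; field; by rewrite hj hM.
Qed.

Lemma lambda_form beta pP pU y : (forall j, (1 <= j <= Dmax)%N -> 0 < m j) -> M != 0 ->
  lambdaF Dmax m beta pP pU (Xof m y) = beta / M *
   \sum_(1 <= j < Dmax.+1) (j%:R * (j.-1)%:R * m j * pU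
       + (- (j%:R * (j.-1)%:R * (pU - pP))) * y j).
Proof.
move=> hm hM; rewrite /lambdaF -(mulrA beta) [X in _ = _ * X]mulr_sumr; congr (_ * _).
apply: eq_big_nat => j /andP[h1 h2].
have hj : m j != 0 by rewrite gt_eqF // hm // h1 -ltnS.
rewrite /wdeg /gU /gfrac /Xof -/M; field; by rewrite hj hM.
Qed.

Lemma SC_decomp tau LP LU beta pP pU cP K y :
  SCbar Dmax m tau LP LU beta pP pU cP K y =
  \sum_(1 <= j < Dmax.+1) (tau * LU * m j + (tau * LP + cP - tau * LU) * y j)
  + eF Dmax m beta pP pU K (Xof m y) *
    \sum_(1 <= j < Dmax.+1) (tau * j%:R * m j * LU + (tau * j%:R * (LP - LU)) * y j).
Proof.
rewrite /SCbar mulr_sumr -big_split /=; apply: eq_bigr => j _.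
rewrite /CostP /CostN; ring.
Qed.

Lemma gamma_ge0 beta pP pU y : inY Dmax m y ->
  (forall j, (1 <= j <= Dmax)%N -> 0 < m j) -> 0 <= M ->
  0 <= beta -> 0 <= pP -> 0 <= pU -> 0 <= gammaF Dmax m beta pP pU (Xof m y).
Proof.
move=> hY hm hM hb hp hu; apply: mulr_ge0 => //.
rewrite big_nat_cond; apply: sumr_ge0 => j /andP[/andP[h1 h2] _].
have hj : (1 <= j <= Dmax)%N by rewrite h1 -ltnS.
have /andP[hy0 hym] := hY j hj; have hmj := hm j hj.
rewrite /wdeg /gU /gfrac /Xof -/M mul0r addr0.
apply: mulr_ge0; first by apply: divr_ge0 => //; apply: mulr_ge0 => //; exact: ltW.
apply: addr_ge0; apply: mulr_ge0 => //; apply: divr_ge0; rewrite ?subr_ge0 //; exact: ltW.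
Qed.

Lemma lambda_ge0 beta pP pU y : inY Dmax m y ->
  (forall j, (1 <= j <= Dmax)%N -> 0 < m j) -> 0 <= M ->
  0 <= beta -> 0 <= pP -> 0 <= pU -> 0 <= lambdaF Dmax m beta pP pU (Xof m y).
Proof.
move=> hY hm hM hb hp hu; apply: mulr_ge0 => //.
rewrite big_nat_cond; apply: sumr_ge0 => j /andP[/andP[h1 h2] _].
have hj : (1 <= j <= Dmax)%N by rewrite h1 -ltnS.
have /andP[hy0 hym] := hY j hj; have hmj := hm j hj.
rewrite /wdeg /gU /gfrac /Xof -/M mul0r addr0.
apply: mulr_ge0; first apply: mulr_ge0 => //.
  by apply: divr_ge0 => //; apply: mulr_ge0 => //; exact: ltW.
apply: addr_ge0; apply: mulr_ge0 => //; apply: divr_ge0; rewrite ?subr_ge0 //; exact: ltW.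
Qed.

Lemma G_ge0 tau LP LU y : inY Dmax m y -> 0 <= tau -> 0 <= LP -> LP <= LU ->
  0 <= \sum_(1 <= j < Dmax.+1) (tau * j%:R * m j * LU + (tau * j%:R * (LP - LU)) * y j).
Proof.
move=> hY ht hLP hLU.
rewrite big_nat_cond; apply: sumr_ge0 => j /andP[/andP[h1 h2] _].
have hj : (1 <= j <= Dmax)%N by rewrite h1 -ltnS.
have /andP[hy0 hym] := hY j hj.
have -> : tau * j%:R * m j * LU + tau * j%:R * (LP - LU) * y j
   = tau * j%:R * (y j * LP + (m j - y j) * LU) by ring.
apply: mulr_ge0; first by apply: mulr_ge0.
apply: addr_ge0; apply: mulr_ge0 => //; first by rewrite subr_ge0.
exact: le_trans hLU.
Qed.

End Forms.

Theorem theorem4 (R : realType) (Dmax : nat) (m : nat -> R)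
  (tau LP LU pP pU beta cP cI xi ded : R) (K : nat)
  (hDmax : (1 <= Dmax)%N)
  (hm_pos : forall d, (1 <= d <= Dmax)%N -> 0 < m d)
  (hm_sum : \sum_(1 <= d < Dmax.+1) m d = 1)
  (htau : 0 < tau <= 1)
  (hLP : 0 <= LP) (hLPU : LP < LU)
  (hpP : 0 <= pP) (hpPU : pP < pU) (hpU : pU <= 1)
  (hbeta : 0 < beta <= 1)
  (hK : (1 <= K)%N)
  (hcP : 0 <= cP) (hcI : 0 <= cI)
  (hxi : 0 < xi <= 1) (hded : 0 <= ded)
  (hA1 : LP < (1 - xi) * LU) (hA2 : cP > cI + ded)
  (ystar : nat -> R)
  (hY : inY Dmax m ystar)
  (hmin : forall y : nat -> R, inY Dmax m y ->
     SCbar Dmax m tau LP LU beta pP pU cP K ystar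
       <= SCbar Dmax m tau LP LU beta pP pU cP K y)
  (ddag : nat)
  (hddag_in : (1 <= ddag <= Dmax)%N)
  (hddag_pos : 0 < ystar ddag)
  (hddag_min : forall d, (1 <= d < ddag)%N -> ~ (0 < ystar d))
  (hddag_lt : (ddag < Dmax)%N) :
  forall d, (ddag < d <= Dmax)%N -> ystar d = m d.
Proof.
move=> d /andP[hd1 hd2].
have hdd : ddag != d by rewrite neq_ltn hd1.
have /andP[hdg1 hdg2] := hddag_in.
have hdin : (1 <= d <= Dmax)%N by rewrite hd2 andbT (leq_trans hdg1 (ltnW hd1)).
have /andP[hyd0 hydm] := hY d hdin.
have /andP[hyg0 hygm] := hY ddag hddag_in.
have [hlt|hgt|//] := ltrgtP (ystar d) (m d); last by exfalso; move: hydm; rewrite leNgt hgt.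
exfalso.
set eps := Num.min (ystar ddag) (m d - ystar d).
have heps : 0 < eps by rewrite lt_min hddag_pos subr_gt0 hlt.
have he1 : eps <= ystar ddag by rewrite ge_min lexx.
have he2 : eps <= m d - ystar d by rewrite ge_min lexx orbT.
set y' := ymv ystar ddag d eps.
have hY' : inY Dmax m y'.
  move=> j hj; rewrite /y' /ymv.
  have [->|_] := eqVneq j ddag; first by apply/andP; split; lra.
  have [->|_] := eqVneq j d; first by apply/andP; split; lra.
  exact: hY.
have /andP[ht0 ht1] := htau; have /andP[hb0 hb1] := hbeta.
set M := \sum_(1 <= d' < Dmax.+1) d'%:R * m d'.
have hM1 : 1 <= M.
  rewrite -hm_sum; apply: ler_sum_nat => j /andP[h1 h2].
  have hj : (1 <= j <= Dmax)%N by rewrite h1 -ltnS.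
  apply: ler_peMl; first exact: ltW (hm_pos j hj).
  by rewrite ler1n.
have hM0 : M != 0 by apply: lt0r_neq0; lra.
have hga : (1 <= ddag < Dmax.+1)%N by rewrite hdg1 ltnS.
have hda : (1 <= d < Dmax.+1)%N by rewrite ltnS hd2 (leq_trans hdg1 (ltnW hd1)).
have hdR : (ddag%:R : R) < d%:R by rewrite ltr_nat.
set g := gammaF Dmax m beta pP pU (Xof m ystar).
set g' := gammaF Dmax m beta pP pU (Xof m y').
have hg : g' - g = - (beta / M * (eps * ((d%:R - ddag%:R) * (pU - pP)))).
  rewrite /g /g' !gamma_form // /y' lin2 //; ring.
have hgpos : 0 < beta / M * (eps * ((d%:R - ddag%:R) * (pU - pP))).
  apply: mulr_gt0; first by apply: divr_gt0 => //; lra.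
  by apply: mulr_gt0 => //; apply: mulr_gt0; rewrite subr_gt0.
have hg'0 : 0 <= g'.
  apply: gamma_ge0 => //; try lra; exact: (le_trans ler01 hM1).
set l := lambdaF Dmax m beta pP pU (Xof m ystar).
set l' := lambdaF Dmax m beta pP pU (Xof m y').
have hl : l' - l = - (beta / M * (eps * ((d%:R * (d.-1)%:R - ddag%:R * (ddag.-1)%:R) * (pU - pP)))).
  rewrite /l /l' !lambda_form // /y' lin2 //; ring.
have hnat : (ddag%:R * (ddag.-1)%:R : R) <= d%:R * (d.-1)%:R.
  rewrite -!natrM ler_nat; apply: leq_mul; first exact: ltnW.
  by rewrite -!subn1 leq_sub2r // ltnW.
have hlpos : 0 <= beta / M * (eps * ((d%:R * (d.-1)%:R - ddag%:R * (ddag.-1)%:R) * (pU - pP))).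
  apply: mulr_ge0; first by apply: divr_ge0; lra.
  by apply: mulr_ge0; [lra|apply: mulr_ge0; rewrite subr_ge0 //; lra].
have hl'0 : 0 <= l' by apply: lambda_ge0 => //; try lra; exact: (le_trans ler01 hM1).
set P := \sum_(1 <= k < K.+1) l ^+ k.-1.
set P' := \sum_(1 <= k < K.+1) l' ^+ k.-1.
have hPP : P' <= P by apply: P_mono => //; lra.
have hP1 : 1 <= P' by apply: P_ge1.
have he : eF Dmax m beta pP pU K (Xof m y') < eF Dmax m beta pP pU K (Xof m ystar).
  rewrite /eF -/g -/g' -/l -/l' -/P -/P'.
  have h1 : g' * P' < g * P' by rewrite ltr_pM2r; lra.
  have h2 : g * P' <= g * P by rewrite ler_wpM2l //; lra.
  lra.
have he0 : 0 <= eF Dmax m beta pP pU K (Xof m y').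
  rewrite /eF -/g' -/l' -/P'; apply: mulr_ge0 => //; lra.
set G := \sum_(1 <= j < Dmax.+1) (tau * j%:R * m j * LU + (tau * j%:R * (LP - LU)) * ystar j).
set G' := \sum_(1 <= j < Dmax.+1) (tau * j%:R * m j * LU + (tau * j%:R * (LP - LU)) * y' j).
have hG : G' - G = - (tau * eps * (d%:R - ddag%:R) * (LU - LP)).
  rewrite /G /G' /y' lin2 //; ring.
have hGpos : 0 < tau * eps * (d%:R - ddag%:R) * (LU - LP).
  by repeat apply: mulr_gt0 => //; rewrite subr_gt0.
have hG'0 : 0 <= G' by apply: G_ge0 => //; exact: ltW.
have hLin : \sum_(1 <= j < Dmax.+1) (tau * LU * m j + (tau * LP + cP - tau * LU) * y' j)
   = \sum_(1 <= j < Dmax.+1) (tau * LU * m j + (tau * LP + cP - tau * LU) * ystar j).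
  by rewrite /y' lin2 // subrr mulr0 addr0.
have := hmin y' hY'.
rewrite !SC_decomp hLin -/G -/G'.
set e := eF _ _ _ _ _ _ (Xof m ystar).
set e' := eF _ _ _ _ _ _ (Xof m y').
have k1 : e' * G' <= e' * G by rewrite ler_wpM2l //; lra.
have k2 : e' * G < e * G by rewrite ltr_pM2r //; lra.
lra.
Qed.
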